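(* Let $d\ge3$ and $k\in\mathbb Z_{\geq0}$. Let $\mathbf z_{k+1},\dots,\mathbf z_{k+d}$ be a basis of $\mathbb Z^d$ with $|\underline{\mathbf z_{k+1}}|\leq|\underline{\mathbf z_{k+2}}|\leq|\underline{\mathbf z_{k+3}}|$ and $\langle\underline{\mathbf z_{k+1}},\underline{\mathbf z_{k+2}}\rangle\leq0$. If $d\geq4$, assume moreover $\det\underline\Lambda_{k+1,n}>|\underline{\mathbf z_{k+2}}|\det\underline\Lambda_{k+1,n-1}$ for $n=3,\dots,d-1$. Let $\boldsymbol\alpha$ be any point of $\mathfrak S_{k+1}\cap\operatorname{int}\mathfrak S_{k+2}$ satisfying $\langle\boldsymbol\alpha,\mathbf z_{k+2}\rangle\cdot\langle\boldsymbol\alpha_{k+2},\mathbf z_{k+1}\rangle\geq0$. Then: (i) for any $\mathbf z\in\mathbb Z^d$ with $|\underline{\mathbf z}|\leq|\underline{\mathbf z_{k+2}}|$, $\mathbf z\neq\mathbf 0,\pm\mathbf z_{k+2}$, we have $|L_{\boldsymbol\alpha}(\mathbf z)|\geq|L_{\boldsymbol\alpha}(\mathbf z_{k+1})|>|L_{\boldsymbol\alpha}(\mathbf z_{k+2})|$; (ii) $\dfrac{1}{2D_{k+2,d-1}B_{k+1}^{d-1}}\leq|L_{\boldsymbol\alpha}(\mathbf z_{k+1})|\cdot|\underline{\mathbf z_{k+1}}|^{d-1}\leq\dfrac{3}{2D_{k+2,d-1}B_{k+1}^{d-1}}$; (iii) for any $\mathbf z\in\mathbb Z^d$ which is not a multiple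 of $\mathbf z_{k+1}$, is different from $\pm\mathbf z_{k+2}$, and satisfies $|\underline{\mathbf z_{k+1}}|\leq|\underline{\mathbf z}|\leq|\underline{\mathbf z_{k+2}}|$, we have \[|L_{\boldsymbol\alpha}(\mathbf z)|\cdot|\underline{\mathbf z}|^{d-1}\geq\min\Big(\frac{1}{2D_{k+1,d-1}},\ \frac{D_{k+1,2}^{d-1}}{2D_{k+2,d-1}B_{k+1}^{d-1}}\Big).\]
   Context: $|\cdot|$ is the Euclidean norm, $\langle\cdot,\cdot\rangle$ the standard inner product. For $\mathbf x=(x_1,\dots,x_d)\in\mathbb R^d$ write $\underline{\mathbf x}=(x_1,\dots,x_{d-1})$. Let $\pi_d=\{\mathbf x\in\mathbb R^d:x_d=1\}$ and $L_{\boldsymbol\alpha}(\mathbf x)=\langle\boldsymbol\alpha,\mathbf x\rangle$ for $\boldsymbol\alpha\in\pi_d$. For given vectors $\mathbf z_1,\mathbf z_2,\dots\in\mathbb Z^d$: $\det\underline\Lambda_{k,l}=|\underline{\mathbf z_k}\wedge\dots\wedge\underline{\mathbf z_{k+l-1}}|$ ($1\le l\le d-1$); $D_{k,l}=\det\underline\Lambda_{k,l}/|\underline{\mathbf z_k}|^l$; $B_k=|\underline{\mathbf z_{k+1}}|/|\underline{\mathbf z_k}|$; $R_k=1/(2|\underline{\mathbf z_{k+1}}|\det\underline\Lambda_{k,d-1})$; when $\underline{\mathbf z_k},\dots,\underline{\mathbf z_{k+d-2}}$ are linearly independent, $\boldsymbol\alpha_k$ is the unique point of $\pi_d$ orthogonal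 to $\mathbf z_k,\dots,\mathbf z_{k+d-2}$ and $\mathfrak S_k=\{\mathbf x\in\pi_d:|\mathbf x-\boldsymbol\alpha_k|\le R_k\}$, a closed ball in the affine hyperplane $\pi_d$, whose interior $\operatorname{int}\mathfrak S_k$ is taken relative to $\pi_d$. The quantities $B_{k+2}$, $R_{k+2}$, $\mathfrak S_{k+2}$ involve $\mathbf z_{k+d+1}$, which is assumed given. Whenever $\boldsymbol\alpha_k$ or $\mathfrak S_k$ appears it is implicitly assumed well defined. *)

(* Defs.v *)
From HB Require Import structures.
From mathcomp Require Import all_boot all_order all_algebra.
Set Implicit Arguments. Unset Strict Implicit. Unset Printing Implicit Defensive.
Import Order.TTheory GRing.Theory Num.Theory.
Local Open Scope ring_scope.

Section Defs.
Variable R : rcfType.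

Definition vnorm (m : nat) (v : 'rV[R]_m) : R := Num.sqrt (\sum_i v 0 i ^+ 2).
Definition dotp (m : nat) (u v : 'rV[R]_m) : R := \sum_i u 0 i * v 0 i.

Definition toR (d : nat) (z : 'rV[int]_d) : 'rV[R]_d := map_mx intr z.

Definition under (d : nat) (x : 'rV[R]_d) : 'rV[R]_(d.-1) :=
  \row_(i < d.-1) x 0 (widen_ord (leq_pred d) i).

(* |v_1 /\ ... /\ v_l| for the rows v_i of M, via the Gram determinant *)
Definition wedge_norm (l m : nat) (M : 'M[R]_(l, m)) : R :=
  Num.sqrt (\det (M *m M^T)).

Variable d : nat.
Variable z : nat -> 'rV[int]_d.

Definition uz (k : nat) : 'rV[R]_(d.-1) := under (toR (z k)).

Definition LamMx (k l : nat) : 'M[R]_(l, d.-1) := \matrix_(i < l) uz (k + i).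

Definition detLam (k l : nat) : R := wedge_norm (LamMx k l).
Definition Dkl (k l : nat) : R := detLam k l / vnorm (uz k) ^+ l.
Definition Bk (k : nat) : R := vnorm (uz k.+1) / vnorm (uz k).
Definition Rk (k : nat) : R := 1 / (2 * vnorm (uz k.+1) * detLam k (d - 1)).

Definition in_pi (x : 'rV[R]_d) : Prop :=
  forall i : 'I_d, val i = d.-1 -> x 0 i = 1.

Definition is_alpha (k : nat) (a : 'rV[R]_d) : Prop :=
  in_pi a /\ forall j, (j < d - 1)%N -> dotp a (toR (z (k + j))) = 0.

Definition in_S (k : nat) (a x : 'rV[R]_d) : Prop :=
  in_pi x /\ vnorm (x - a) <= Rk k.
Definition in_intS (k : nat) (a x : 'rV[R]_d) : Prop :=
  in_pi x /\ vnorm (x - a) < Rk k.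

Definition L (a : 'rV[R]_d) (x : 'rV[int]_d) : R := dotp a (toR x).

End Defs.

Definition is_Zbasis (d : nat) (z : nat -> 'rV[int]_d) (k : nat) : Prop :=
  forall v : 'rV[int]_d, exists! c : 'rV[int]_d,
    v = \sum_(i < d) c 0 i *: z (k.+1 + i)%N.

(* Main.v *)
Require Import Defs.
From HB Require Import structures.
From mathcomp Require Import all_boot all_order all_algebra.
From mathcomp Require Import ring lra zify.
Import Order.TTheory GRing.Theory Num.Theory.
Local Open Scope ring_scope.
Set Implicit Arguments. Unset Strict Implicit. Unset Printing Implicit Defensive.

Lemma dotpC (R : rcfType) m (u v : 'rV[R]_m) : dotp u v = dotp v u.
Proof. by rewrite /dotp; apply: eq_bigr => i _; rewrite mulrC. Qed.

Lemma dotpBl (R : rcfType) m (u v w : 'rV[R]_m) : dotp (u - v) w = dotp u w - dotp v w.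
Proof.
rewrite /dotp -sumrB; apply: eq_bigr => i _; rewrite !mxE; ring.
Qed.

Lemma dotp_sumr (R : rcfType) m (I : finType) (a : 'rV[R]_m) (c : I -> R) (v : I -> 'rV[R]_m) :
  dotp a (\sum_i c i *: v i) = \sum_i c i * dotp a (v i).
Proof.
rewrite /dotp.
under eq_bigr => j _ do rewrite summxE mulr_sumr.
rewrite exchange_big /=; apply: eq_bigr => i _; rewrite mulr_sumr.
by apply: eq_bigr => j _; rewrite !mxE; ring.
Qed.

Lemma toR_sum (R : rcfType) d (I : finType) (c : I -> int) (v : I -> 'rV[int]_d) :
  toR R (\sum_i c i *: v i) = \sum_i (c i)%:~R *: toR R (v i).
Proof.
apply/matrixP => a b; rewrite /toR mxE !summxE rmorph_sum /=.
by apply: eq_bigr => i _; rewrite !mxE rmorphM.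
Qed.

Lemma toRN (R : rcfType) d (v : 'rV[int]_d) : toR R (- v) = - toR R v.
Proof. by apply/matrixP => a b; rewrite /toR !mxE rmorphN. Qed.

Lemma under_sum (R : rcfType) d (I : finType) (c : I -> R) (v : I -> 'rV[R]_d) :
  under (\sum_i c i *: v i) = \sum_i c i *: under (v i).
Proof.
apply/matrixP => a b; rewrite /under !mxE summxE summxE.
by apply: eq_bigr => i _; rewrite !mxE.
Qed.

Lemma underN (R : rcfType) d (v : 'rV[R]_d) : under (- v) = - under v.
Proof. by apply/matrixP => a b; rewrite /under !mxE. Qed.

Lemma sumsq_ge0 (R : rcfType) m (v : 'rV[R]_m) : 0 <= \sum_i v 0 i ^+ 2.
Proof. by apply: sumr_ge0 => i _; rewrite sqr_ge0. Qed.

Lemma vnorm_ge0 (R : rcfType) m (v : 'rV[R]_m) : 0 <= vnorm v.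
Proof. exact: sqrtr_ge0. Qed.

Lemma vnorm_sq (R : rcfType) m (v : 'rV[R]_m) : vnorm v ^+ 2 = dotp v v.
Proof.
rewrite /vnorm sqr_sqrtr ?sumsq_ge0 // /dotp.
Qed.

Lemma dotpvv_eq0 (R : rcfType) m (v : 'rV[R]_m) : dotp v v = 0 -> v = 0.
Proof.
move=> h; apply/matrixP => a b; rewrite ord1 mxE.
have h0 : forall i : 'I_m, predT i -> 0 <= v 0 i * v 0 i.
  by move=> i _; rewrite -expr2 sqr_ge0.
have := psumr_eq0P h0 h (isT : predT b).
by move/eqP; rewrite -expr2 sqrf_eq0 => /eqP.
Qed.

Lemma vnorm_gt0 (R : rcfType) m (v : 'rV[R]_m) : v != 0 -> 0 < vnorm v.
Proof.
move=> nz; rewrite lt_def vnorm_ge0 andbT; apply/eqP => h.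
move/eqP: nz; apply; apply: dotpvv_eq0; rewrite -vnorm_sq h; ring.
Qed.

Lemma vnormN (R : rcfType) m (v : 'rV[R]_m) : vnorm (- v) = vnorm v.
Proof. by rewrite /vnorm; congr Num.sqrt; apply: eq_bigr => i _; rewrite mxE sqrrN. Qed.

Lemma CS (R : rcfType) m (u v : 'rV[R]_m) : `|dotp u v| <= vnorm u * vnorm v.
Proof.
have [->|nz] := eqVneq u 0.
  rewrite /dotp big1 ?normr0 ?mulr_ge0 ?vnorm_ge0 //.
  by move=> i _; rewrite mxE mul0r.
set A := dotp u u; set B := dotp u v; set C := dotp v v.
have hA : 0 < A by rewrite /A -vnorm_sq; apply: exprn_gt0; apply: vnorm_gt0.
have hC : 0 <= C by rewrite /C -vnorm_sq sqr_ge0.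
have key : 0 <= A * (A * C - B ^+ 2).
  have -> : A * (A * C - B ^+ 2) = \sum_i (A * v 0 i - B * u 0 i) ^+ 2.
    have e : forall i : 'I_m, (A * v 0 i - B * u 0 i) ^+ 2
       = A ^+ 2 * (v 0 i * v 0 i) - 2 * A * B * (u 0 i * v 0 i) + B ^+ 2 * (u 0 i * u 0 i).
      by move=> i; ring.
    rewrite (eq_bigr _ (fun i _ => e i)) big_split sumrB /= -!mulr_sumr.
    rewrite -/(dotp v v) -/(dotp u v) -/(dotp u u) -/A -/B -/C; ring.
  by apply: sumr_ge0 => i _; rewrite sqr_ge0.
have h2 : B ^+ 2 <= A * C by rewrite -subr_ge0; rewrite pmulr_rge0 in key.
rewrite -sqrtr_sqr /vnorm -sqrtrM ?sumsq_ge0 // ler_sqrt; last by rewrite mulr_ge0 ?sumsq_ge0.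
have eA : \sum_i u 0 i ^+ 2 = A by rewrite /A /dotp; apply: eq_bigr => i _; rewrite expr2.
have eC : \sum_i v 0 i ^+ 2 = C by rewrite /C /dotp; apply: eq_bigr => i _; rewrite expr2.
by rewrite eA eC.
Qed.

Lemma dotp_mx (R : rcfType) m (u v : 'rV[R]_m) : dotp u v = (u *m v^T) 0 0.
Proof. by rewrite /dotp mxE; apply: eq_bigr => i _; rewrite mxE. Qed.

Lemma lift_widen m (i : 'I_m) : lift ord_max i = widen_ord (leqnSn m) i.
Proof. by apply: val_inj => /=; rewrite /bump leqNgt ltn_ord. Qed.

Definition topM (R : rcfType) m p (N : 'M[R]_(m.+1, p)) : 'M[R]_(m, p) :=
  \matrix_(i < m, j < p) N (widen_ord (leqnSn m) i) j.

Lemma proj (R : rcfType) m p (N : 'M[R]_(m.+1, p)) :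
  (forall v : 'rV_m, v *m topM N = 0 -> v = 0) ->
  exists (y : 'rV_p) (c : 'rV_m), y *m (topM N)^T = 0 /\ row ord_max N = y + c *m topM N /\
     \det (N *m N^T) = \det (topM N *m (topM N)^T) * dotp y y.
Proof.
set M := topM N => injM.
set G := M *m M^T.
have uG : G \in unitmx.
  rewrite -row_free_unit; apply: inj_row_free => v hv; apply: injM.
  apply: dotpvv_eq0; rewrite dotp_mx trmx_mul !mulmxA -(mulmxA v) -/G hv.
  by rewrite !mul0mx mxE.
set x := row ord_max N.
set c := x *m M^T *m invmx G.
set y := x - c *m M.
have yM : y *m M^T = 0.
  by rewrite /y mulmxBl -mulmxA -/G /c mulmxKV // subrr.
exists y, c; split => //; split; first by rewrite /y subrK.
have hy : y = x - c *m M by [].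
have hx : forall j, x 0 j = N ord_max j by move=> j; rewrite mxE.
have hM : forall i j, M i j = N (widen_ord (leqnSn m) i) j by move=> i j; rewrite mxE.
clearbody y c x M.
set cext := fun j : 'I_m.+1 => if unlift ord_max j is Some j' then c 0 j' else 0.
have cmax : cext ord_max = 0 by rewrite /cext unlift_none.
have cw : forall l : 'I_m, cext (widen_ord (leqnSn m) l) = c 0 l.
  by move=> l; rewrite /cext -lift_widen liftK.
clearbody cext.
set E : 'M[R]_(m.+1) := \matrix_(i, j) ((i == j)%:R - (if i == ord_max then cext j else 0)).
set N' : 'M[R]_(m.+1, p) := \matrix_(i, j) (if i == ord_max then y 0 j else N i j).
have eN : N' = E *m N.
  apply/matrixP => i j; rewrite [RHS]mxE [LHS]mxE.
  under eq_bigr => l _ do rewrite mxE mulrBl.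
  rewrite sumrB; rewrite (bigD1 i) //= eqxx mul1r big1 ?addr0; last first.
    by move=> l /negbTE; rewrite eq_sym => ->; rewrite mul0r.
  case: eqP => [->|_]; last by rewrite big1 ?subr0 // => l _; rewrite mul0r.
  rewrite big_ord_recr /= cmax mul0r addr0 hy mxE hx mxE.
  congr (_ - _); rewrite mxE; apply: eq_bigr => l _; rewrite cw hM //.
have dE : \det E = 1.
  rewrite det_trig; last first.
    apply/is_trig_mxP => i j lij; rewrite mxE.
    have -> : (i == j) = false by apply/negbTE; rewrite neq_ltn lij.
    case: eqP => [ei|_]; last by rewrite subr0.
    by move: lij; rewrite ei ltnNge -ltnS ltn_ord.
  apply: big1 => i _; rewrite mxE eqxx; case: eqP => [->|_]; last by rewrite subr0.
  by rewrite cmax subr0.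
have -> : \det (N *m N^T) = \det (N' *m N'^T).
  by rewrite eN trmx_mul !mulmxA -(mulmxA E N) !det_mulmx det_tr dE; ring.
rewrite (expand_det_row _ ord_max) big_ord_recr /= big1 ?add0r; last first.
  move=> j _; rewrite !mxE.
  have -> : \sum_l N' ord_max l * N'^T l (widen_ord (leqnSn m) j) = (y *m M^T) 0 j.
    rewrite !mxE; apply: eq_bigr => l _; rewrite !mxE eqxx.
    have -> : (widen_ord (leqnSn m) j == ord_max) = false.
      by apply/negbTE; rewrite neq_ltn /= ltn_ord.
    by rewrite hM.
  by rewrite yM mxE mul0r.
rewrite mulrC; congr (_ * _); last first.
  rewrite mxE dotp_mx mxE; apply: eq_bigr => l _; rewrite !mxE eqxx //.
rewrite /cofactor -signr_odd oddD addbb expr0 mul1r; congr (\det _).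
apply/matrixP => i j; rewrite !mxE; apply: eq_bigr => l _; rewrite !mxE.
rewrite !lift_widen.
have ne : forall k : 'I_m, (widen_ord (leqnSn m) k == ord_max) = false.
  by move=> k; apply/negbTE; rewrite neq_ltn /= ltn_ord.
by rewrite (ne i) (ne j) !hM.
Qed.

Lemma dotpDl (R : rcfType) m (u v w : 'rV[R]_m) : dotp (u + v) w = dotp u w + dotp v w.
Proof. rewrite /dotp -big_split; apply: eq_bigr => i _; rewrite !mxE; exact: mulrDl. Qed.

Lemma dotpZl (R : rcfType) m (t : R) (u w : 'rV[R]_m) : dotp (t *: u) w = t * dotp u w.
Proof. rewrite /dotp mulr_sumr; apply: eq_bigr => i _; rewrite !mxE; ring. Qed.

Lemma dotpDr (R : rcfType) m (u v w : 'rV[R]_m) : dotp w (u + v) = dotp w u + dotp w v.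
Proof. by rewrite dotpC dotpDl !(dotpC w). Qed.

Lemma dotpZr (R : rcfType) m (t : R) (u w : 'rV[R]_m) : dotp w (t *: u) = t * dotp w u.
Proof. by rewrite dotpC dotpZl dotpC. Qed.

Lemma dotp_ge0 (R : rcfType) m (u : 'rV[R]_m) : 0 <= dotp u u.
Proof. by rewrite -vnorm_sq sqr_ge0. Qed.

Lemma height (R : rcfType) m p (N : 'M[R]_(m.+1, p)) (w : 'rV[R]_p) (t : R) (b : 'rV[R]_m) :
  (forall v : 'rV_m, v *m topM N = 0 -> v = 0) ->
  w = t *: row ord_max N + b *m topM N ->
  (0 < \det (N *m N^T) \/ 0 < \det (topM N *m (topM N)^T)) ->
  t ^+ 2 * \det (N *m N^T) <= dotp w w * \det (topM N *m (topM N)^T) /\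
  0 < \det (topM N *m (topM N)^T) /\ 0 <= \det (N *m N^T).
Proof.
move=> inj ew hpos; have [y [c [yM [ex ed]]]] := proj inj.
set M := topM N in yM ex ed *; set g := \det (M *m M^T) in ed *.
set q := (t *: c + b) *m M.
have ew' : w = t *: y + q.
  by rewrite ew ex /q scalerDr mulmxDl scalemxAl addrA.
have yq : dotp y q = 0.
  by rewrite dotp_mx /q trmx_mul mulmxA yM mul0mx mxE.
have hww : t ^+ 2 * dotp y y <= dotp w w.
  rewrite ew' !dotpDl !dotpDr !dotpZl !dotpZr yq (dotpC q) yq.
  have := dotp_ge0 q; lra.
have hy := dotp_ge0 y.
have gpos : 0 < g.
  case: hpos => // hpos.
  rewrite ed in hpos; rewrite ltNge; apply/negP => hg.
  have : g * dotp y y <= 0 by rewrite mulr_le0_ge0.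
  by rewrite leNgt hpos.
have h0 : 0 <= \det (N *m N^T) by rewrite ed mulr_ge0 // ltW.
split; last by split.
rewrite ed.
have : t ^+ 2 * dotp y y * g <= dotp w w * g by rewrite ler_pM2r.
by rewrite (mulrC g) mulrA.
Qed.

Lemma sel_inj (R : rcfType) m h p (f : 'I_m -> 'I_h) (L' : 'M[R]_(h, p)) :
  injective f ->
  (forall v : 'rV_h, v *m L' = 0 -> v = 0) ->
  forall v : 'rV_m, v *m (\matrix_(i, j) L' (f i) j) = 0 -> v = 0.
Proof.
move=> finj inj v hv.
set A : 'M[R]_(m, h) := \matrix_(i, j) (f i == j)%:R.
have eL : \matrix_(i, j) L' (f i) j = A *m L'.
  apply/matrixP => i j; rewrite !mxE (bigD1 (f i)) //= mxE eqxx mul1r big1 ?addr0 //.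
  by move=> l /negbTE; rewrite mxE eq_sym => ->; rewrite mul0r.
have h0 : v *m A = 0 by apply: inj; rewrite -mulmxA -eL.
apply/matrixP => a i; rewrite ord1 mxE.
have : (v *m A) 0 (f i) = 0 by rewrite h0 mxE.
rewrite mxE (bigD1 i) //= mxE eqxx mulr1 big1 ?addr0 //.
by move=> l /negbTE hl; rewrite mxE (inj_eq finj) hl mulr0.
Qed.

Lemma lam_inj (R : rcfType) n (z : nat -> 'rV[int]_(n.+3)) k m :
  row_free (LamMx R z k n.+2) -> (m <= n.+2)%N ->
  forall v : 'rV_m, v *m LamMx R z k m = 0 -> v = 0.
Proof.
move=> rf hm v hv.
have e : LamMx R z k m = \matrix_(i, j) (LamMx R z k n.+2) (widen_ord hm i) j.
  by apply/matrixP => i j; rewrite !mxE.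
move: hv; rewrite e; apply: sel_inj; last first.
  by move=> w hw; apply: (row_free_inj rf); rewrite hw mul0mx.
by move=> a b /(congr1 val) /= hab; apply: val_inj.
Qed.

Lemma top_lam (R : rcfType) d (z : nat -> 'rV[int]_d) k m :
  topM (LamMx R z k m.+1) = LamMx R z k m.
Proof. by apply/matrixP => i j; rewrite !mxE. Qed.

Lemma row_lam (R : rcfType) d (z : nat -> 'rV[int]_d) k m :
  row ord_max (LamMx R z k m.+1) = uz R z (k + m).
Proof. by apply/matrixP => i j; rewrite !mxE. Qed.

Lemma under_dot (R : rcfType) n (x y : 'rV[R]_(n.+3)) :
  x 0 ord_max = 0 -> dotp x y = dotp (under x) (under y).
Proof.
move=> h; rewrite /dotp big_ord_recr /= h mul0r addr0.
apply: eq_bigr => i _; rewrite !mxE.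
by have -> : widen_ord (leq_pred n.+3) i = widen_ord (leqnSn n.+2) i by apply: val_inj.
Qed.

Lemma under_norm (R : rcfType) n (x : 'rV[R]_(n.+3)) :
  x 0 ord_max = 0 -> vnorm x = vnorm (under x).
Proof.
move=> h; rewrite /vnorm; congr Num.sqrt; rewrite big_ord_recr /= h expr0n addr0.
apply: eq_bigr => i _; rewrite !mxE.
by have -> : widen_ord (leq_pred n.+3) i = widen_ord (leqnSn n.+2) i by apply: val_inj.
Qed.

Lemma err (R : rcfType) n (x a : 'rV[R]_(n.+3)) (w : 'rV[int]_(n.+3)) :
  in_pi x -> in_pi a ->
  `|L x w - L a w| <= vnorm (x - a) * vnorm (under (toR R w)).
Proof.
move=> hx ha; rewrite /L -dotpBl.
have h0 : (x - a) 0 ord_max = 0 by rewrite !mxE hx // ha // subrr.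
by rewrite under_dot // (under_norm h0) CS.
Qed.

Lemma wedge_sq (R : rcfType) q (M : 'M[R]_q) : wedge_norm M = `|\det M|.
Proof. by rewrite /wedge_norm det_mulmx det_tr -expr2 sqrtr_sqr. Qed.

Definition Amx (R : rcfType) n (z : nat -> 'rV[int]_(n.+3)) k : 'M[R]_(n.+3) :=
  \matrix_(i < n.+3) toR R (z (k.+1 + i)%N).

Lemma detA (R : rcfType) n (z : nat -> 'rV[int]_(n.+3)) k :
  is_Zbasis z k -> `|\det (Amx R z k)| = 1.
Proof.
move=> hZ.
set Ai : 'M[int]_(n.+3) := \matrix_(i < n.+3) z (k.+1 + i)%N.
have eA : Amx R z k = map_mx intr Ai by apply/matrixP => i j; rewrite !mxE.
have exj : forall j : 'I_n.+3, exists c : 'rV[int]_(n.+3),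
    delta_mx 0 j == \sum_(i < n.+3) c 0 i *: z (k.+1 + i)%N.
  by move=> j; have [c [hc _]] := hZ (delta_mx 0 j); exists c; apply/eqP.
set C : 'M[int]_(n.+3) := \matrix_(j < n.+3) xchoose (exj j).
have hC : C *m Ai = 1%:M.
  apply/row_matrixP => j; rewrite row_mul rowK row1 mulmx_sum_row.
  transitivity (\sum_(i < n.+3) xchoose (exj j) 0 i *: z (k.+1 + i)%N).
    by apply: eq_bigr => i _; rewrite rowK.
  exact: esym (eqP (xchooseP (exj j))).
have : \det C * \det Ai = 1 by rewrite -det_mulmx hC det1.
move/intUnitRing.unitzPl; rewrite qualifE => /orP [] /eqP hd;
  by rewrite eA det_map_mx hd ?rmorphN rmorph1 ?normrN normr1.
Qed.

Lemma AmxL (R : rcfType) n (z : nat -> 'rV[int]_(n.+3)) k (a : 'rV[R]_(n.+3)) j :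
  (Amx R z k *m a^T) j 0 = L a (z (k.+1 + j)%N).
Proof. rewrite mxE /L dotpC /dotp; apply: eq_bigr => l _; rewrite !mxE //. Qed.

Lemma liftmax_under n (j : 'I_n.+2) :
  lift ord_max j = widen_ord (leq_pred n.+3) j.
Proof. by apply: val_inj => /=; rewrite /bump leqNgt ltn_ord. Qed.

Lemma sign_norm (R : rcfType) (e : nat) : `|(-1) ^+ e : R| = 1.
Proof. by rewrite normrX normrN1 expr1n. Qed.

Lemma cram2 (R : rcfType) n (z : nat -> 'rV[int]_(n.+3)) k (a2 : 'rV[R]_(n.+3)) :
  is_Zbasis z k -> is_alpha z k.+2 a2 ->
  `|L a2 (z k.+1)| * detLam R z k.+2 (n.+3 - 1) = 1.
Proof.
move=> hZ [hpi ho].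
set A := Amx R z k.
have key : (\adj A *m (A *m a2^T)) ord_max 0 = (\det A *: a2^T) ord_max 0.
  by rewrite mulmxA mul_adj_mx mul_scalar_mx.
rewrite [RHS]mxE [X in _ * X]mxE hpi // mulr1 mxE big_ord_recl /= in key.
rewrite big1 ?addr0 in key; last first.
  move=> j _; rewrite AmxL.
  have -> : (k.+1 + lift ord0 j = k.+2 + j)%N by rewrite lift0 addnS addSn.
  by rewrite /L ho ?mulr0 //= subn1 /= ltn_ord.
rewrite AmxL addn0 mxE /cofactor add0n in key.
have eL : row' 0 (col' ord_max A) = LamMx R z k.+2 n.+2.
  apply/matrixP => i j; rewrite !mxE liftmax_under.
  by have -> : (k.+1 + lift ord0 i = k.+2 + i)%N by rewrite lift0 addnS addSn.
rewrite eL in key.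
have -> : detLam R z k.+2 (n.+3 - 1) = `|\det (LamMx R z k.+2 n.+2)| by exact: wedge_sq.
by rewrite -(detA R hZ) -/A -key normrM normrM sign_norm mul1r mulrC.
Qed.

Lemma cram1 (R : rcfType) n (z : nat -> 'rV[int]_(n.+3)) k (a1 : 'rV[R]_(n.+3)) :
  is_Zbasis z k -> is_alpha z k.+1 a1 ->
  `|L a1 (z (k.+1 + n.+2)%N)| * detLam R z k.+1 (n.+3 - 1) = 1.
Proof.
move=> hZ [hpi ho].
set A := Amx R z k.
have key : (\adj A *m (A *m a1^T)) ord_max 0 = (\det A *: a1^T) ord_max 0.
  by rewrite mulmxA mul_adj_mx mul_scalar_mx.
rewrite [RHS]mxE [X in _ * X]mxE hpi // mulr1 mxE big_ord_recr /= in key.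
rewrite big1 ?add0r in key; last first.
  move=> j _; rewrite AmxL /=.
  by rewrite /L ho ?mulr0 //= subn1 /= ltn_ord.
rewrite AmxL mxE /cofactor in key.
have eL : row' ord_max (col' ord_max A) = LamMx R z k.+1 n.+2.
  apply/matrixP => i j; rewrite !mxE liftmax_under lift_widen.
  by have -> : widen_ord (leqnSn n.+2) j = widen_ord (leq_pred n.+3) j by apply: val_inj.
rewrite eL in key.
have -> : detLam R z k.+1 (n.+3 - 1) = `|\det (LamMx R z k.+1 n.+2)| by exact: wedge_sq.
by rewrite -(detA R hZ) -/A -key normrM normrM sign_norm mul1r mulrC.
Qed.

Lemma Lsum (R : rcfType) n (z : nat -> 'rV[int]_(n.+3)) k (c : 'rV[int]_(n.+3)) w (a : 'rV[R]_(n.+3)) :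
  w = \sum_(i < n.+3) c 0 i *: z (k.+1 + i)%N ->
  L a w = \sum_(i < n.+3) (c 0 i)%:~R * L a (z (k.+1 + i)%N).
Proof. by move=> ->; rewrite /L toR_sum dotp_sumr. Qed.

Lemma Usum (R : rcfType) n (z : nat -> 'rV[int]_(n.+3)) k (c : 'rV[int]_(n.+3)) w :
  w = \sum_(i < n.+3) c 0 i *: z (k.+1 + i)%N ->
  under (toR R w) = \sum_(i < n.+3) (c 0 i)%:~R *: uz R z (k.+1 + i)%N.
Proof. by move=> ->; rewrite toR_sum under_sum. Qed.

Lemma L2w (R : rcfType) n (z : nat -> 'rV[int]_(n.+3)) k (c : 'rV[int]_(n.+3)) w (a2 : 'rV[R]_(n.+3)) :
  is_alpha z k.+2 a2 ->
  w = \sum_(i < n.+3) c 0 i *: z (k.+1 + i)%N ->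
  L a2 w = (c 0 0)%:~R * L a2 (z k.+1).
Proof.
move=> [_ ho] /(Lsum a2) ->; rewrite big_ord_recl /= addn0 big1 ?addr0 //.
move=> j _; have -> : (k.+1 + lift ord0 j = k.+2 + j)%N by rewrite lift0 addnS addSn.
by rewrite /L ho ?mulr0 //= subn1 /= ltn_ord.
Qed.

Lemma L1w (R : rcfType) n (z : nat -> 'rV[int]_(n.+3)) k (c : 'rV[int]_(n.+3)) w (a1 : 'rV[R]_(n.+3)) :
  is_alpha z k.+1 a1 ->
  w = \sum_(i < n.+3) c 0 i *: z (k.+1 + i)%N ->
  L a1 w = (c 0 ord_max)%:~R * L a1 (z (k.+1 + n.+2)%N).
Proof.
move=> [_ ho] /(Lsum a1) ->; rewrite big_ord_recr /= big1 ?add0r //.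
by move=> j _; rewrite /L ho ?mulr0 //= subn1 /= ltn_ord.
Qed.

Lemma int_sq_ge1 (R : rcfType) (q : int) : q != 0 -> 1 <= (q%:~R : R) ^+ 2.
Proof.
move=> h; have h1 : 1 <= `|q| by rewrite -gtz0_ge1 normr_gt0.
rewrite -rmorphXn /= ler1z -real_normK ?num_real //; exact: exprn_ege1.
Qed.

Lemma int_abs_ge1 (R : rcfType) (q : int) : q != 0 -> 1 <= `|(q%:~R : R)|.
Proof.
by move=> h; rewrite -intr_norm ler1z -gtz0_ge1 normr_gt0.
Qed.

Lemma lowb (R : rcfType) n (z : nat -> 'rV[int]_(n.+3)) k (c : 'rV[int]_(n.+3)) w m :
  (m < n.+2)%N ->
  row_free (LamMx R z k.+1 n.+2) ->
  w = \sum_(i < n.+3) c 0 i *: z (k.+1 + i)%N ->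
  (forall i : 'I_n.+3, (m < i)%N -> c 0 i = 0) ->
  c 0 (inord m) != 0 ->
  (0 < \det (LamMx R z k.+1 m.+1 *m (LamMx R z k.+1 m.+1)^T) \/
   0 < \det (LamMx R z k.+1 m *m (LamMx R z k.+1 m)^T)) ->
  \det (LamMx R z k.+1 m.+1 *m (LamMx R z k.+1 m.+1)^T)
    <= vnorm (under (toR R w)) ^+ 2 * \det (LamMx R z k.+1 m *m (LamMx R z k.+1 m)^T)
  /\ 0 < \det (LamMx R z k.+1 m *m (LamMx R z k.+1 m)^T).
Proof.
move=> hm rf ew hz hcm hpos.
set N := LamMx R z k.+1 m.+1.
have inj : forall v : 'rV_m, v *m topM N = 0 -> v = 0.
  by rewrite /N top_lam; apply: lam_inj => //; apply: ltnW.
set t : R := (c 0 (inord m))%:~R.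
set b : 'rV[R]_m := \row_(i < m) (c 0 (inord i))%:~R.
have ew' : under (toR R w) = t *: row ord_max N + b *m topM N.
  rewrite (Usum R ew) /N row_lam top_lam mulmx_sum_row.
  set F := fun i : nat => (c 0 (inord i))%:~R *: uz R z (k.+1 + i)%N.
  have e1 : \sum_(i < n.+3) (c 0 i)%:~R *: uz R z (k.+1 + i)%N = \sum_(i < n.+3) F i.
    by apply: eq_bigr => i _; rewrite /F inord_val.
  rewrite e1 -(big_mkord xpredT F).
  rewrite (big_cat_nat (n := m.+1)) //=; last by apply: leq_trans hm _.
  rewrite [X in _ + X]big1_seq ?addr0; last first.
    move=> i /andP [_]; rewrite mem_index_iota => /andP [hi1 hi2].
    have hi : (i < n.+3)%N by [].
    rewrite /F.
    have -> : c 0 (inord i) = 0 by apply: hz; rewrite inordK.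
    by rewrite scale0r.
  rewrite big_mkord big_ord_recr /= addrC /F /t; congr (_ + _).
  by apply: eq_bigr => i _; rewrite rowK mxE.
have hpos' : 0 < \det (N *m N^T) \/ 0 < \det (topM N *m (topM N)^T).
  by rewrite /N top_lam.
have [h1 [h2 h3]] := height inj ew' hpos'.
rewrite /N top_lam -vnorm_sq in h1 h2 h3 *; split => //.
have ht : 1 <= t ^+ 2.
  exact: int_sq_ge1.
apply: le_trans h1; rewrite -[X in X <= _]mul1r; exact: ler_wpM2r.
Qed.

Lemma midcase (R : rcfType) n (z : nat -> 'rV[int]_(n.+3)) k (c : 'rV[int]_(n.+3)) w :
  ((4 <= n.+3)%N -> forall n0 : nat, (3 <= n0)%N -> (n0 <= n.+3 - 1)%N ->
     detLam R z k.+1 n0 > vnorm (uz R z k.+2) * detLam R z k.+1 n0.-1) ->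
  row_free (LamMx R z k.+1 n.+2) ->
  w = \sum_(i < n.+3) c 0 i *: z (k.+1 + i)%N ->
  c 0 ord_max = 0 ->
  (exists i : 'I_n.+3, (2 <= i)%N && (c 0 i != 0)) ->
  vnorm (uz R z k.+2) < vnorm (under (toR R w)).
Proof.
move=> hyp rf ew cmax [i /andP [i2 ci]].
pose P := fun j : nat => [&& (j < n.+3)%N, (2 <= j)%N & c 0 (inord j) != 0].
have exP : exists j, P j by exists i; rewrite /P ltn_ord i2 inord_val ci.
have ubP : forall j, P j -> (j <= n.+2)%N by move=> j /and3P [].
case: (ex_maxnP exP ubP) => m Pm maxm.
case/and3P: Pm => m3 m2 cm.
have mne : m != n.+2.
  apply/eqP => em; move: cm; rewrite em.
  have -> : inord n.+2 = ord_max :> 'I_n.+3 by apply: val_inj; rewrite /= inordK.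
  by rewrite cmax eqxx.
have mlt : (m < n.+2)%N by lia.
have hz : forall i : 'I_n.+3, (m < i)%N -> c 0 i = 0.
  move=> j hj; apply/eqP; apply/negPn/negP => hc.
  have : P j by rewrite /P ltn_ord inord_val hc andbT; apply: leq_trans hj; apply: leq_trans m2 _.
  by move/maxm; rewrite leqNgt hj.
have h4 := hyp ltac:(lia) m.+1 ltac:(lia) ltac:(rewrite subn1 /=; lia).
rewrite /= /detLam /wedge_norm in h4.
set G1 := \det (LamMx R z k.+1 m.+1 *m (LamMx R z k.+1 m.+1)^T) in h4 *.
set G0 := \det (LamMx R z k.+1 m *m (LamMx R z k.+1 m)^T) in h4 *.
set n2 := vnorm (uz R z k.+2) in h4 *.
have n2p : 0 <= n2 by apply: vnorm_ge0.
have s0 : 0 <= Num.sqrt G0 by apply: sqrtr_ge0.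
have G1p : 0 < G1.
  rewrite -sqrtr_gt0; apply: le_lt_trans h4; exact: mulr_ge0.
have [hl hG0] := lowb mlt rf ew hz cm (or_introl G1p).
rewrite -/G1 -/G0 in hl hG0.
have e1 := sqr_sqrtr (ltW G1p); have e0 := sqr_sqrtr (ltW hG0).
have key : n2 ^+ 2 * G0 < G1.
  rewrite -e1 -e0; set a := Num.sqrt G1 in h4 *; set b := Num.sqrt G0 in h4 s0 *.
  have hb : 0 <= n2 * b by apply: mulr_ge0.
  have ha : 0 < a by apply: le_lt_trans h4.
  have h5 : 0 < a - n2 * b by rewrite subr_gt0.
  have h6 : 0 < a + n2 * b by apply: ltr_wpDr.
  have := mulr_gt0 h5 h6; rewrite !expr2; nra.
have r0 := vnorm_ge0 (under (toR R w)).
set r := vnorm (under (toR R w)) in hl r0 *.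
have : n2 ^+ 2 * G0 < r ^+ 2 * G0 by apply: lt_le_trans hl.
rewrite ltr_pM2r // !expr2 => hh; nra.
Qed.

Lemma toR2 (R : rcfType) d (p q : int) (x y : 'rV[int]_d) :
  toR R (p *: x + q *: y) = p%:~R *: toR R x + q%:~R *: toR R y.
Proof. by apply/matrixP => a b; rewrite /toR !mxE rmorphD !rmorphM. Qed.

Lemma under2 (R : rcfType) d (p q : R) (x y : 'rV[R]_d) :
  under (p *: x + q *: y) = p *: under x + q *: under y.
Proof. by apply/matrixP => a b; rewrite /under !mxE. Qed.

Lemma L2 (R : rcfType) d (a : 'rV[R]_d) (p q : int) (x y : 'rV[int]_d) :
  L a (p *: x + q *: y) = p%:~R * L a x + q%:~R * L a y.
Proof. by rewrite /L toR2 dotpDr !dotpZr. Qed.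

Lemma two_terms n (z : nat -> 'rV[int]_(n.+3)) k (c : 'rV[int]_(n.+3)) w :
  w = \sum_(i < n.+3) c 0 i *: z (k.+1 + i)%N ->
  c 0 ord_max = 0 ->
  ~ (exists i : 'I_n.+3, (2 <= i)%N && (c 0 i != 0)) ->
  w = c 0 ord0 *: z k.+1 + c 0 (lift ord0 ord0) *: z k.+2.
Proof.
move=> -> cmax nex; rewrite big_ord_recl big_ord_recl big1 ?addr0.
  by congr (_ *: z _ + _ *: z _); rewrite /= ?addn0 ?addn1.
move=> j _.
have -> : c 0 (lift ord0 (lift ord0 j)) = 0.
  apply/eqP; apply/negPn/negP => hc; apply: nex; exists (lift ord0 (lift ord0 j)).
  by rewrite hc andbT.
by rewrite scale0r.
Qed.

Lemma int_cases (q : int) : q = 0 \/ q = 1 \/ q = -1 \/ (2 <= `|q|)%R.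
Proof. lia. Qed.

Lemma int_abs_ge2 (R : rcfType) (q : int) : (2 <= `|q|)%R -> 2 <= `|(q%:~R : R)|.
Proof. by move=> h; rewrite -intr_norm; have -> : (2:R) = (2:int)%:~R by []; rewrite ler_int. Qed.

Lemma tri (R : rcfType) (x y : R) : `|y| <= `|x| + `|x - y|.
Proof. by have := ler_normD x (y - x); rewrite addrC subrK distrC. Qed.

Lemma pow_mono (R : rcfType) (a b : R) e : 0 <= a -> a <= b -> a ^+ e <= b ^+ e.
Proof. by move=> ha hab; apply: lerXn2r; rewrite ?nnegrE //; apply: le_trans hab. Qed.

Unset Implicit Arguments.

Theorem lemma4 (R : rcfType) (d k : nat) (z : nat -> 'rV[int]_d)
  (a1 a2 alpha : 'rV[R]_d) :
  (3 <= d)%N ->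
  is_Zbasis z k ->
  vnorm (uz R z k.+1) <= vnorm (uz R z k.+2) ->
  vnorm (uz R z k.+2) <= vnorm (uz R z k.+3) ->
  dotp (uz R z k.+1) (uz R z k.+2) <= 0 ->
  ((4 <= d)%N -> forall n : nat, (3 <= n)%N -> (n <= d - 1)%N ->
     detLam R z k.+1 n > vnorm (uz R z k.+2) * detLam R z k.+1 n.-1) ->
  row_free (LamMx R z k.+1 (d - 1)) ->
  row_free (LamMx R z k.+2 (d - 1)) ->
  is_alpha z k.+1 a1 ->
  is_alpha z k.+2 a2 ->
  in_S z k.+1 a1 alpha ->
  in_intS z k.+2 a2 alpha ->
  L alpha (z k.+2) * L a2 (z k.+1) >= 0 ->
  (forall w : 'rV[int]_d,
     vnorm (under (toR R w)) <= vnorm (uz R z k.+2) ->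
     w != 0 -> w != z k.+2 -> w != - z k.+2 ->
     `|L alpha w| >= `|L alpha (z k.+1)| /\
     `|L alpha (z k.+1)| > `|L alpha (z k.+2)|) /\
  (1 / (2 * Dkl R z k.+2 (d - 1) * Bk R z k.+1 ^+ (d - 1))
     <= `|L alpha (z k.+1)| * vnorm (uz R z k.+1) ^+ (d - 1)
   /\ `|L alpha (z k.+1)| * vnorm (uz R z k.+1) ^+ (d - 1)
     <= 3 / (2 * Dkl R z k.+2 (d - 1) * Bk R z k.+1 ^+ (d - 1))) /\
  (forall w : 'rV[int]_d,
     ~ (exists m : int, w = m *: z k.+1) ->
     w != z k.+2 -> w != - z k.+2 ->
     vnorm (uz R z k.+1) <= vnorm (under (toR R w)) ->
     vnorm (under (toR R w)) <= vnorm (uz R z k.+2) ->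
     `|L alpha w| * vnorm (under (toR R w)) ^+ (d - 1) >=
       Num.min (1 / (2 * Dkl R z k.+1 (d - 1)))
               (Dkl R z k.+1 2 ^+ (d - 1) /
                  (2 * Dkl R z k.+2 (d - 1) * Bk R z k.+1 ^+ (d - 1)))).
Proof.
case: d z a1 a2 alpha => [|[|[|n]]] z a1 a2 alpha hd //.
move=> hZ h12 h23 h12d hyp rf1 rf2 ha1 ha2 hS1 hS2 hsign.
have hpi1 := ha1.1; have hpi2 := ha2.1.
have [hpiA hd1] := hS1; have [_ hd2] := hS2.
have cr2 := cram2 hZ ha2; have cr1 := cram1 hZ ha1.
have La1z1 : L a1 (z k.+1) = 0.
  by have := ha1.2 0%N isT; rewrite addn0.
have La2z2 : L a2 (z k.+2) = 0.
  by have := ha2.2 0%N isT; rewrite addn0.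
have n1p : 0 < vnorm (uz R z k.+1).
  apply: vnorm_gt0; apply/eqP => h0.
  have := lam_inj rf1 (leqnn _) (v := delta_mx 0 0).
  rewrite -rowE rowK addn0 h0 => /(_ erefl) /matrixP /(_ 0 0).
  by rewrite !mxE eqxx /= => /eqP; rewrite oner_eq0.
set e := (n.+3 - 1)%N.
set n1 := vnorm (uz R z k.+1) in h12 n1p *.
set n2 := vnorm (uz R z k.+2) in h12 h23 hyp hd1 *.
set n3 := vnorm (uz R z k.+3) in h23 hd2.
set D1 := detLam R z k.+1 e in cr1 hd1 *.
set D2 := detLam R z k.+2 e in cr2 hd2 *.
set l1 := L a1 (z (k.+1 + n.+2)%N) in cr1.
set l2 := L a2 (z k.+1) in cr2 hsign.
have n2p : 0 < n2 by apply: lt_le_trans h12.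
have n3p : 0 < n3 by apply: lt_le_trans h23.
have D1p : 0 < D1.
  have : 0 <= D1 by apply: sqrtr_ge0.
  rewrite le_eqVlt => /orP [/eqP h|//]; by move: cr1; rewrite -h mulr0 => /eqP; rewrite eq_sym oner_eq0.
have D2p : 0 < D2.
  have : 0 <= D2 by apply: sqrtr_ge0.
  rewrite le_eqVlt => /orP [/eqP h|//]; by move: cr2; rewrite -h mulr0 => /eqP; rewrite eq_sym oner_eq0.
have E1 : forall x, `|L alpha x - L a1 x| * (2 * n2 * D1) <= vnorm (under (toR R x)).
  move=> x; have := err x hpiA hpi1.
  have vK : vnorm (alpha - a1) * (2 * n2 * D1) <= 1.
    by rewrite -ler_pdivlMr ?mulr_gt0 // div1r -[X in _ <= X]div1r.
  have := vnorm_ge0 (under (toR R x)); have := vnorm_ge0 (alpha - a1).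
  have K : 0 < 2 * n2 * D1 by rewrite !mulr_gt0.
  move: vK K; set K := 2 * n2 * D1; set v := vnorm (alpha - a1); set r := vnorm _.
  move=> *; nra.
have E2 : forall x, 0 < vnorm (under (toR R x)) ->
    `|L alpha x - L a2 x| * (2 * n3 * D2) < vnorm (under (toR R x)).
  move=> x rp; have := err x hpiA hpi2.
  have vK : vnorm (alpha - a2) * (2 * n3 * D2) < 1.
    by rewrite -ltr_pdivlMr ?mulr_gt0 // div1r -[X in _ < X]div1r.
  have := vnorm_ge0 (alpha - a2).
  have K : 0 < 2 * n3 * D2 by rewrite !mulr_gt0.
  move: vK K rp; set K := 2 * n3 * D2; set v := vnorm (alpha - a2); set r := vnorm _.
  move=> *; nra.
have E2w : forall x, `|L alpha x - L a2 x| * (2 * n3 * D2) <= vnorm (under (toR R x)).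
  move=> x; have := vnorm_ge0 (under (toR R x)); rewrite le_eqVlt => /orP [/eqP h|h].
    have := err x hpiA hpi2; rewrite -h mulr0 => h0.
    have : `|L alpha x - L a2 x| = 0 by apply/eqP; rewrite eq_le h0 normr_ge0.
    by move->; rewrite mul0r.
  exact: ltW (E2 x h).
set lam1 := L alpha (z k.+1).
set lam2 := L alpha (z k.+2).
have h13 : n1 <= n3 by apply: le_trans h23.
have Fa : `|lam1 - l2| * (2 * D2) < 1.
  have := E2 (z k.+1) n1p; rewrite -/lam1 -/l2 -/n1 => h.
  have := normr_ge0 (lam1 - l2); nra.
have Fb : `|lam1| * (2 * D1) <= 1.
  have := E1 (z k.+1); rewrite -/lam1 La1z1 subr0 -/n1 => h.
  have := normr_ge0 lam1; nra.
have Fc : `|lam2| * (2 * D2) < 1.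
  have := E2 (z k.+2) n2p; rewrite -/lam2 La2z2 subr0 -/n2 => h.
  have := normr_ge0 lam2; nra.
have Fd1 : `|lam1| * D2 > 1 / 2.
  have := tri lam1 l2; have := normr_ge0 (lam1 - l2); nra.
have Fd2 : `|lam1| * D2 < 3 / 2.
  have := tri l2 lam1; rewrite distrC; have := normr_ge0 (lam1 - l2); nra.
have P1p : 0 < n1 ^+ e by apply: exprn_gt0.
have P2p : 0 < n2 ^+ e by apply: exprn_gt0.
have eDB : 2 * Dkl R z k.+2 e * Bk R z k.+1 ^+ e = 2 * D2 / n1 ^+ e.
  rewrite /Dkl /Bk -/n1 -/n2 -/D2 expr_div_n.
  by field; rewrite !gt_eqF.
split; last split.
- move=> w hw hw0 hwz hwnz.
  have [c [ec _]] := hZ w.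
  have hA1 := L1w ha1 ec; have hA2 := L2w ha2 ec.
  rewrite -/l1 in hA1; rewrite -/l2 in hA2.
  have rw0 := vnorm_ge0 (under (toR R w)).
  have hE1 := E1 w; have hE2 := E2w w.
  set rw := vnorm (under (toR R w)) in hw rw0 hE1 hE2 *.
  set Lw := L alpha w in hE1 hE2 *.
  rewrite hA1 in hE1; rewrite hA2 in hE2.
  set cm := (c 0 ord_max)%:~R in hE1.
  set c0 := (c 0 0)%:~R in hE2.
  have W1 : `|Lw - cm * l1| * (2 * D1) <= 1.
    have := normr_ge0 (Lw - cm * l1); nra.
  have W2 : `|Lw - c0 * l2| * (2 * D2) <= 1.
    have := normr_ge0 (Lw - c0 * l2); nra.
  split; last by have := normr_ge0 lam2; nra.
  have [cm0|cmn] := eqVneq (c 0 ord_max) 0; last first.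
    have h1 : `|l1| <= `|cm * l1|.
      by rewrite normrM ler_peMl ?normr_ge0 // int_abs_ge1.
    have := tri Lw (cm * l1); have := normr_ge0 (Lw - cm * l1); have := normr_ge0 Lw.
    have := normr_ge0 lam1; nra.
  have [ex|nex] := boolP [exists i : 'I_n.+3, (2 <= i)%N && (c 0 i != 0)].
    have := midcase hyp rf1 ec cm0 (existsP ex); rewrite -/n2 -/rw => h.
    by move: hw; rewrite leNgt h.
  have nexP : ~ (exists i : 'I_n.+3, (2 <= i)%N && (c 0 i != 0)).
    by move=> [i hi]; apply: (negP nex); apply/existsP; exists i.
  have ew2 := two_terms ec cm0 nexP.
  have hLw : Lw = (c 0 ord0)%:~R * lam1 + (c 0 (lift ord0 ord0))%:~R * lam2.
    by rewrite /Lw ew2 L2.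
  have hUw : under (toR R w) = (c 0 ord0)%:~R *: uz R z k.+1 + (c 0 (lift ord0 ord0))%:~R *: uz R z k.+2.
    by rewrite ew2 toR2 under2.
  have hr2 : rw ^+ 2 = (c 0 ord0)%:~R ^+ 2 * n1 ^+ 2 + 2 * ((c 0 ord0)%:~R * (c 0 (lift ord0 ord0))%:~R) * dotp (uz R z k.+1) (uz R z k.+2) + (c 0 (lift ord0 ord0))%:~R ^+ 2 * n2 ^+ 2.
    rewrite /rw /n1 /n2 !vnorm_sq hUw !dotpDl !dotpDr !dotpZl !dotpZr (dotpC (uz R z k.+2)); ring.
  have ec0 : c0 = (c 0 ord0)%:~R by [].
  rewrite ec0 in W2.
  move: hLw hr2 W2 ew2; set p := c 0 ord0; set q := c 0 (lift ord0 ord0) => hLw hr2 W2 ew2.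
  set dt := dotp (uz R z k.+1) (uz R z k.+2) in hr2.
  have := normr_ge0 lam1; have := normr_ge0 Lw => nLw nl1.
  have l2p : 0 < `|l2|.
    rewrite normr_gt0; apply/eqP => h; move: cr2; rewrite h normr0 mul0r => /eqP; by rewrite eq_sym oner_eq0.
  have common : (p%:~R : R) ^+ 2 = 1 -> `|lam1| <= `|Lw|.
    move=> psq.
    have sl : 0 < lam1 * l2.
      have x1 : `|lam1 - l2| * 2 < `|l2| by nra.
      have h := ler_norm (- ((lam1 - l2) * l2)); rewrite normrN normrM in h.
      have l2sq : `|l2| ^+ 2 = l2 ^+ 2 by rewrite real_normK ?num_real.
      have := normr_ge0 (lam1 - l2); nra.
    have hs' : 0 <= lam2 * l2 by move: hsign; rewrite -/lam2.
    have ll : 0 <= lam1 * lam2.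
      have := mulr_ge0 (ltW sl) hs'; nra.
    have e1 : `|Lw| ^+ 2 = Lw ^+ 2 by rewrite real_normK ?num_real.
    have e2 : `|lam1| ^+ 2 = lam1 ^+ 2 by rewrite real_normK ?num_real.
    have [pq|pq] := lerP 0 (p%:~R * q%:~R : R).
      have eL : Lw ^+ 2 = (p%:~R : R) ^+ 2 * lam1 ^+ 2 + 2 * ((p%:~R : R) * q%:~R) * (lam1 * lam2) + ((q%:~R : R) * lam2) ^+ 2.
        by rewrite hLw; ring.
      rewrite psq mul1r in eL.
      have := sqr_ge0 ((q%:~R : R) * lam2); have := mulr_ge0 pq ll; nra.
    exfalso.
    have qn : q != 0 by apply/eqP => q0; move: pq; rewrite q0 mulr0 ltxx.
    have hq := int_sq_ge1 R qn.
    rewrite psq mul1r in hr2.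
    have := mulr_le0 (ltW pq) h12d; rewrite -/dt => hpd.
    have := sqr_ge0 n1; nra.
  have [p0|[p1|[pm1|p2]]] := int_cases p.
  + have [q0|[q1|[qm1|q2]]] := int_cases q.
    * by move: hw0; rewrite ew2 p0 q0 !scale0r addr0 eqxx.
    * by move: hwz; rewrite ew2 p0 q1 scale0r add0r scale1r eqxx.
    * by move: hwnz; rewrite ew2 p0 qm1 scale0r add0r scaleN1r eqxx.
    * have hq := int_abs_ge2 R q2.
      have hq2 : 4 <= (q%:~R : R) ^+ 2.
        by rewrite -real_normK ?num_real //; have := normr_ge0 (q%:~R : R); nra.
      move: hr2; rewrite p0 /= mulr0z expr0n /= !mul0r mulr0 !add0r => hr2.
      exfalso; nra.
  + by apply: common; rewrite p1 expr1n.
  + by apply: common; rewrite pm1 /= sqrrN expr1n.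
  + have hp := int_abs_ge2 R p2.
    have h1 : 2 * `|l2| <= `|p%:~R * l2|.
      by rewrite normrM ler_pM2r // normr_gt0; apply/eqP => h; move: cr2; rewrite h normr0 mul0r => /eqP; rewrite eq_sym oner_eq0.
    have := tri Lw (p%:~R * l2); have := normr_ge0 (Lw - p%:~R * l2).
    nra.
- rewrite eDB.
  have -> : 1 / (2 * D2 / n1 ^+ e) = n1 ^+ e / (2 * D2) by field; rewrite !gt_eqF.
  have -> : 3 / (2 * D2 / n1 ^+ e) = 3 * n1 ^+ e / (2 * D2) by field; rewrite !gt_eqF.
  have D2p2 : 0 < 2 * D2 by rewrite mulr_gt0.
  rewrite ler_pdivrMr // ler_pdivlMr //.
  set P := n1 ^+ e in P1p *; split; nra.
- move=> w hnm hwz hwnz hlo hhi.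
  have [c [ec _]] := hZ w.
  have hA1 := L1w ha1 ec; have hA2 := L2w ha2 ec.
  rewrite -/l1 in hA1; rewrite -/l2 in hA2.
  have rw0 := vnorm_ge0 (under (toR R w)).
  have hE1 := E1 w; have hE2 := E2w w.
  set rw := vnorm (under (toR R w)) in hlo hhi rw0 hE1 hE2 *.
  set Lw := L alpha w in hE1 hE2 *.
  rewrite hA1 in hE1; rewrite hA2 in hE2.
  set cm := (c 0 ord_max)%:~R in hE1.
  set c0 := (c 0 0)%:~R in hE2.
  have W1 : `|Lw - cm * l1| * (2 * D1) <= 1.
    have := normr_ge0 (Lw - cm * l1); nra.
  have W2 : `|Lw - c0 * l2| * (2 * D2) <= 1.
    have := normr_ge0 (Lw - c0 * l2); nra.
  have eT1 : 1 / (2 * Dkl R z k.+1 e) = n1 ^+ e / (2 * D1).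
    by rewrite /Dkl -/n1 -/D1; field; rewrite !gt_eqF.
  set D12 := detLam R z k.+1 2.
  have eT2 : Dkl R z k.+1 2 ^+ e / (2 * Dkl R z k.+2 e * Bk R z k.+1 ^+ e) = (D12 / n1) ^+ e / (2 * D2).
    rewrite eDB /Dkl -/n1 -/D12 !expr_div_n -exprM mulnC exprM.
    by field; rewrite !gt_eqF.
  rewrite eT1 eT2 ge_min.
  have Pw : n1 ^+ e <= rw ^+ e by apply: pow_mono => //; apply: ltW.
  have D1p2 : 0 < 2 * D1 by rewrite mulr_gt0.
  have D2p2 : 0 < 2 * D2 by rewrite mulr_gt0.
  have nLw := normr_ge0 Lw.
  have [cm0|cmn] := eqVneq (c 0 ord_max) 0; last first.
    apply/orP; left.
    have h1 : `|l1| <= `|cm * l1|.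
      by rewrite normrM ler_peMl ?normr_ge0 // int_abs_ge1.
    have := tri Lw (cm * l1); have := normr_ge0 (Lw - cm * l1).
    move=> *; have hL1 : 1 <= `|Lw| * (2 * D1) by nra.
    rewrite ler_pdivrMr //.
    have := exprn_ge0 e rw0; move: Pw; set P := rw ^+ e; set Q := n1 ^+ e => *; nra.
  have [ex|nex] := boolP [exists i : 'I_n.+3, (2 <= i)%N && (c 0 i != 0)].
    have := midcase hyp rf1 ec cm0 (existsP ex); rewrite -/n2 -/rw => h.
    by exfalso; move: hhi; rewrite leNgt h.
  have nexP : ~ (exists i : 'I_n.+3, (2 <= i)%N && (c 0 i != 0)).
    by move=> [i hi]; apply: (negP nex); apply/existsP; exists i.
  have ew2 := two_terms ec cm0 nexP.
  have hUw : under (toR R w) = (c 0 ord0)%:~R *: uz R z k.+1 + (c 0 (lift ord0 ord0))%:~R *: uz R z k.+2.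
    by rewrite ew2 toR2 under2.
  have hr2 : rw ^+ 2 = (c 0 ord0)%:~R ^+ 2 * n1 ^+ 2 + 2 * ((c 0 ord0)%:~R * (c 0 (lift ord0 ord0))%:~R) * dotp (uz R z k.+1) (uz R z k.+2) + (c 0 (lift ord0 ord0))%:~R ^+ 2 * n2 ^+ 2.
    rewrite /rw /n1 /n2 !vnorm_sq hUw !dotpDl !dotpDr !dotpZl !dotpZr (dotpC (uz R z k.+2)); ring.
  have ec0 : c0 = (c 0 ord0)%:~R by [].
  rewrite ec0 in W2.
  move: hr2 W2 ew2; set p := c 0 ord0; set q := c 0 (lift ord0 ord0) => hr2 W2 ew2.
  have [q0|qn] := eqVneq q 0.
    by exfalso; apply: hnm; exists p; rewrite ew2 q0 scale0r addr0.
  have [p0|pn] := eqVneq p 0.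
    have [q0|[q1|[qm1|q2]]] := int_cases q.
    * by move: qn; rewrite q0 eqxx.
    * by move: hwz; rewrite ew2 p0 q1 scale0r add0r scale1r eqxx.
    * by move: hwnz; rewrite ew2 p0 qm1 scale0r add0r scaleN1r eqxx.
    * have hq := int_abs_ge2 R q2.
      have hq2 : 4 <= (q%:~R : R) ^+ 2.
        by rewrite -real_normK ?num_real //; have := normr_ge0 (q%:~R : R); nra.
      move: hr2; rewrite p0 /= mulr0z expr0n /= !mul0r mulr0 !add0r => hr2.
      exfalso; nra.
  apply/orP; right.
  have l2p : 0 < `|l2|.
    rewrite normr_gt0; apply/eqP => h; move: cr2; rewrite h normr0 mul0r => /eqP; by rewrite eq_sym oner_eq0.
  have hLw2 : 1 <= `|Lw| * (2 * D2).
    have h1 : `|l2| <= `|p%:~R * l2|.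
      by rewrite normrM ler_peMl ?normr_ge0 // int_abs_ge1.
    have := tri Lw (p%:~R * l2); have := normr_ge0 (Lw - p%:~R * l2).
    move=> *; nra.
  have eL1 : LamMx R z k.+1 1 = uz R z k.+1.
    by apply/matrixP => i j; rewrite ord1 mxE addn0.
  have hz : forall i : 'I_n.+3, (1 < i)%N -> c 0 i = 0.
    move=> i hi; apply/eqP; apply/negPn/negP => hc; apply: nexP; exists i.
    by rewrite hi hc.
  have ci1 : c 0 (inord 1) != 0.
    by have -> : inord 1 = lift ord0 ord0 :> 'I_n.+3 by apply: val_inj; rewrite /= inordK.
  have G1e : \det (LamMx R z k.+1 1 *m (LamMx R z k.+1 1)^T) = n1 ^+ 2.
    by rewrite det_mx11 eL1 -dotp_mx -vnorm_sq.
  have hpos : 0 < \det (LamMx R z k.+1 1.+1 *m (LamMx R z k.+1 1.+1)^T) \/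
     0 < \det (LamMx R z k.+1 1 *m (LamMx R z k.+1 1)^T).
    by right; rewrite G1e; apply: exprn_gt0.
  have [hl _] := lowb (m := 1%N) isT rf1 ec hz ci1 hpos.
  rewrite G1e -/rw in hl.
  have hD12 : D12 <= rw * n1.
    rewrite /D12 /detLam /wedge_norm.
    rewrite -(ger0_norm (mulr_ge0 rw0 (ltW n1p))) -sqrtr_sqr ler_sqrt ?sqr_ge0 //.
    by rewrite exprMn.
  have D12p : 0 <= D12 by apply: sqrtr_ge0.
  have hq : D12 / n1 <= rw by rewrite ler_pdivrMr.
  have hX : (D12 / n1) ^+ e <= rw ^+ e by apply: pow_mono => //; rewrite divr_ge0 // ltW.
  have X0 : 0 <= (D12 / n1) ^+ e by apply: exprn_ge0; rewrite divr_ge0 // ltW.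
  rewrite ler_pdivrMr //.
  move: hX X0; set X := (D12 / n1) ^+ e; set Y := rw ^+ e => hX X0.
  nra.
Qed.
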